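(* Let $g$ be a good probability density. Let $\mathbf Z=(Z_1,Z_2,\ldots)$ be i.i.d. with density $g$. Let $\mathbf X=(X_1,X_2,\ldots)$ be independent of $\mathbf Z$ with distribution absolutely continuous with respect to that of $\mathbf Z$. Let $\mathcal I=\{I_1,\ldots,I_d\}\subseteq\mathbb N$ be an a.s. finite (possibly empty) set of distinct indices chosen as a measurable function of $\mathbf X$, let $X^*=\max\{X_{I_1},\ldots,X_{I_d}\}$, and define $$Y_k=\begin{cases}2X^*+Z_j&\text{if }k=I_j\text{ for some }1\le j\le d,\\ X_k&\text{if }k\notin\mathcal I.\end{cases}$$ Then the distribution of $\mathbf Y=(Y_k)_{k\in\mathbb N}$ is absolutely continuous with respect to that of $\mathbf Z$.
   Context: A probability density $g$ is good if its support is $\mathbb{R}_+=[0,\infty)$ and for every $K>0$ there is a constant $C(K)$ with $\sup_{u\in(0,\infty),\,x\in(0,K]}g(u-x)/g(u)\le C(K)$ (with $g=0$ on $(-\infty,0)$). Example: the Exponential density. *)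

(* Defs.v *)
From HB Require Import structures.
From mathcomp Require Import all_boot all_order all_algebra.
From mathcomp Require Import all_classical all_reals all_analysis.
Set Implicit Arguments. Unset Strict Implicit. Unset Printing Implicit Defensive.
Import Order.TTheory GRing.Theory Num.Theory.
Local Open Scope classical_set_scope.
Local Open Scope ring_scope.

Definition seq_measurable (R : realType) : set (set (nat -> R)) :=
  <<s \bigcup_(n in [set: nat])
        [set (fun x : nat -> R => x n) @^-1` B | B in [set B : set R | measurable B]] >>.

Definition good_density (R : realType) (g : R -> R) : Prop :=
  [/\ measurable_fun [set: R] g,
      (forall x, 0 <= g x),
      (\int[lebesgue_measure]_(x in [set: R]) (g x)%:E = 1)%E &
  [/\
      (forall x, x < 0 -> g x = 0),
      (forall x, 0 < x -> 0 < g x) &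
      (forall K, 0 < K -> exists C : R, forall u x, 0 < u -> 0 < x -> x <= K ->
          g (u - x) / g u <= C)]].

Definition iid_with_density (R : realType) (d : measure_display)
    (Omega : measurableType d) (P : probability Omega R)
    (g : R -> R) (Z : nat -> Omega -> R) : Prop :=
  [/\ (forall n, measurable_fun [set: Omega] (Z n)),
      (forall n (B : set R), measurable B ->
          P (Z n @^-1` B) = (\int[lebesgue_measure]_(x in B) (g x)%:E)%E) &
      (forall (S : seq nat) (B : nat -> set R), uniq S ->
          (forall n, measurable (B n)) ->
          P (\bigcap_(n in [set n | n \in S]) (Z n @^-1` B n)) =
          (\prod_(n <- S) P (Z n @^-1` B n))%E)].

Definition vec (R : realType) (Omega : Type) (Z : nat -> Omega -> R) :
  Omega -> nat -> R := fun w n => Z n w.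

Definition indep_seq (R : realType) (d : measure_display)
    (Omega : measurableType d) (P : probability Omega R)
    (X Z : Omega -> nat -> R) : Prop :=
  forall A B : set (nat -> R), seq_measurable A -> seq_measurable B ->
    P (X @^-1` A `&` Z @^-1` B) = (P (X @^-1` A) * P (Z @^-1` B))%E.

Definition law_abs_cont (R : realType) (d : measure_display)
    (Omega : measurableType d) (P : probability Omega R)
    (X Z : Omega -> nat -> R) : Prop :=
  forall A : set (nat -> R), seq_measurable A ->
    P (Z @^-1` A) = 0%E -> P (X @^-1` A) = 0%E.

Definition index_selector (R : realType) (I : (nat -> R) -> seq nat) : Prop :=
  (forall x, uniq (I x)) /\
  (forall s : seq nat, seq_measurable [set x | I x = s]).

(* X^* = max {X_{I_1},...,X_{I_d}} (irrelevant when d = 0). *)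
Definition Xstar (R : realType) (s : seq nat) (x : nat -> R) : R :=
  \big[Num.max/x (head 0%N s)]_(i <- s) x i.

(* Y_k = 2 X^* + Z_j if k = I_j, and Y_k = X_k if k \notin I.
   (0-based: I_j is the j-th element of the list, Z_j is z j.) *)
Definition Ymap (R : realType) (s : seq nat) (x z : nat -> R) : nat -> R :=
  fun k => if k \in s then 2 * Xstar s x + z (index k s) else x k.

(* Main.v *)
Require Import Defs.
From HB Require Import structures.
From mathcomp Require Import all_boot all_order all_algebra.
From mathcomp Require Import all_classical all_reals all_analysis.
Import Order.TTheory GRing.Theory Num.Theory.
Local Open Scope classical_set_scope.
Local Open Scope ring_scope.
From mathcomp Require Import ring lra measurable_realfun.
Set Implicit Arguments. Unset Strict Implicit. Unset Printing Implicit Defensive.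
Definition RN (R : realType) := nat -> R.
HB.instance Definition _ (R : realType) := gen_eqMixin (RN R).
HB.instance Definition _ (R : realType) := gen_choiceMixin (RN R).
HB.instance Definition _ (R : realType) := isPointed.Build (RN R) (fun _ => 0).
Definition G0 (R : realType) : set (set (RN R)) := \bigcup_(n in [set: nat])
        [set (fun x : nat -> R => x n) @^-1` B | B in [set B : set R | measurable B]].
Arguments G0 : clear implicits.
Notation TT R := (g_sigma_algebraType (G0 R)).

Lemma mcoord (R : realType) (n : nat) : measurable_fun [set: TT R] (fun x : TT R => x n).
Proof.
move=> _ B mB; rewrite setTI; apply: sub_sigma_algebra; exists n => //; exists B => //.
Qed.

Lemma mTfun d (aT : measurableType d) (R : realType) (f : aT -> TT R) :
  (forall n, measurable_fun [set: aT] (fun a => f a n)) -> measurable_fun [set: aT] f.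
Proof.
move=> mf; apply: (@measurability _ _ aT (TT R) setT f (G0 R)) => //.
move=> _ [_ [n _ [B mB <-]] <-].
exact: (mf n measurableT B mB).
Qed.

Lemma seq_measurableE (R : realType) (A : set (nat -> R)) :
  seq_measurable A -> measurable (A : set (TT R)).
Proof. by []. Qed.

Definition cyl (R : realType) (F : seq nat) (B : nat -> set R) : set (TT R) :=
  [set x | forall n, n \in F -> B n (x n)].
Definition Cyl (R : realType) : set (set (TT R)) :=
  [set A | exists F B, [/\ uniq F, (forall n, measurable (B n)) & A = cyl F B]].

Arguments Cyl : clear implicits.

Lemma cyl_cons (R : realType) a F (B : nat -> set R) :
  cyl (a :: F) B = (fun x : TT R => x a) @^-1` B a `&` cyl F B.
Proof.
apply/seteqP; split => x /=.
  by move=> H; split; [apply: H; rewrite inE eqxx | move=> n nF; apply: H; rewrite inE nF orbT].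
by move=> [H1 H2] n; rewrite inE => /orP[/eqP->|]//; exact: H2.
Qed.

Lemma cyl_nil (R : realType) (B : nat -> set R) : cyl [::] B = setT.
Proof. by apply/seteqP; split => x // _ n. Qed.

Lemma cyl_meas (R : realType) F (B : nat -> set R) :
  (forall n, measurable (B n)) -> measurable (cyl F B).
Proof.
move=> mB; elim: F => [|a F IH]; first by rewrite cyl_nil.
rewrite cyl_cons; apply: measurableI => //.
by rewrite -[X in measurable X]setTI; apply: mcoord.
Qed.

Lemma Cyl_setI (R : realType) : setI_closed (Cyl R).
Proof.
move=> _ _ [F1 [B1 [u1 m1 ->]]] [F2 [B2 [u2 m2 ->]]].
exists (undup (F1 ++ F2)), (fun n => (if n \in F1 then B1 n else setT) `&`
                                   (if n \in F2 then B2 n else setT)).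
split; first exact: undup_uniq.
  by move=> n; apply: measurableI; case: ifP.
apply/seteqP; split => x /=.
  move=> [H1 H2] n; rewrite mem_undup mem_cat => _; split.
    by case: ifP => // /H1.
  by case: ifP => // /H2.
move=> H; split => n nF.
  have nU : n \in undup (F1 ++ F2) by rewrite mem_undup mem_cat; apply/orP; left.
  case: (H n nU) => h1 _; move: h1; case: ifP => // h; by rewrite h in nF.
have nU : n \in undup (F1 ++ F2) by rewrite mem_undup mem_cat; apply/orP; right.
case: (H n nU) => _ h1; move: h1; case: ifP => // h; by rewrite h in nF.

Qed.

Lemma Cyl_gen (R : realType) : (measurable : set (set (TT R))) = <<s Cyl R >>.
Proof.
apply/seteqP; split.
  apply: sub_sigma_algebra2 => _ [n _ [B mB <-]].
  exists [:: n], (fun _ => B); split => //.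
  apply/seteqP; split => x /=; first by move=> Bx k; rewrite inE => /eqP->.
  by move=> H; apply: H; rewrite inE.
apply: smallest_sub; first exact: sigma_algebra_measurable.
by move=> _ [F [B [_ mB ->]]]; exact: cyl_meas.
Qed.

Lemma Cyl_unique (R : realType) (m1 m2 : {measure set (TT R) -> \bar R}) :
  (m1 setT < +oo)%E ->
  (forall F B, uniq F -> (forall n, measurable (B n)) -> m1 (cyl F B) = m2 (cyl F B)) ->
  forall A, measurable A -> m1 A = m2 A.
Proof.
move=> m1oo H A mA.
apply: (measure_unique (Cyl R) (fun _ => setT)) => //.
- exact: Cyl_gen.
- exact: Cyl_setI.
- move=> _; exists [::], (fun _ => setT); split => //; by rewrite cyl_nil.
- by rewrite bigcup_const.
- by move=> _ [F [B [uF mB ->]]]; exact: H.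
Qed.
Section X. Context (R : realType).
Lemma leb_shift (c : R) (D : set R) : measurable D ->
  (pushforward lebesgue_measure ((fun t : R => t + c)%R : _ -> measurableTypeR R)  D = lebesgue_measure D)%E.
Proof.
move=> mD.
apply/esym/lebesgue_measure_unique => //=.
  by apply: measurable_funD => //; exact: measurable_id.
move=> _ _ [[a b] _ <-].
rewrite /pushforward.
have -> : (fun t : R => t + c) @^-1` `]a, b]%classic = `](a - c), (b - c)]%classic.
  apply/seteqP; split => t /=; rewrite !in_itv /= ?ltrBlDr ?lerBrDr //.
rewrite !lebesgue_measure_itv /= !lte_fin ltrD2r. 
by case: ifP => // _; rewrite -!EFinD; congr (_%:E); ring.
Qed.
End X.
Section Y. Context (R : realType).
Lemma int_shift (c : R) (D : set R) (f : R -> \bar R) : measurable D ->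
  measurable_fun [set: R] f -> (forall x, (0 <= f x)%E) ->
  (\int[lebesgue_measure]_(t in (fun t : R => t + c)%R @^-1` D) f (t + c)%R =
   \int[lebesgue_measure]_(u in D) f u)%E.
Proof.
move=> mD mf f0.
have mphi : measurable_fun [set: measurableTypeR R] ((fun t : R => t + c)%R : measurableTypeR R -> measurableTypeR R).
  by apply: measurable_funD => //; exact: measurable_id.
rewrite -(@ge0_integral_pushforward _ _ _ _ R _ mphi lebesgue_measure D f mD) //; last first.
  exact: measurable_funS mf.
apply: eq_measure_integral => //= A mA AS.
exact: leb_shift.
Qed.
End Y.

Definition mkmfun d d' (aT : measurableType d) (rT : measurableType d') (f : aT -> rT)
  (mf : measurable_fun setT f) : {mfun aT >-> rT} :=
  HB.pack f (isMeasurableFun.Build _ _ _ _ f mf).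

Section Main.
Context (R : realType) (d : measure_display) (Omega : measurableType d)
  (P : probability Omega R) (g : R -> R) (Z X : nat -> Omega -> R).
Hypothesis Zi : iid_with_density P g Z.
Hypothesis mX : forall n, measurable_fun [set: Omega] (X n).

Let mZ : forall n, measurable_fun [set: Omega] (Z n).
Proof. by case: Zi. Qed.

Let mvZ : measurable_fun setT (vec Z : Omega -> TT R).
Proof. by apply: mTfun => n; exact: mZ. Qed.
Let mvX : measurable_fun setT (vec X : Omega -> TT R).
Proof. by apply: mTfun => n; exact: mX. Qed.

Notation muZ := (distribution P (mkmfun mvZ)).
Notation muX := (distribution P (mkmfun mvX)).
Notation gam := (distribution P (mkmfun (mZ 0))).

Lemma muZE A : muZ A = P (vec Z @^-1` A). Proof. by []. Qed.
Lemma muXE A : muX A = P (vec X @^-1` A). Proof. by []. Qed.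
Lemma gamE A : gam A = P (Z 0 @^-1` A). Proof. by []. Qed.

Lemma PZn n B : measurable B -> P (Z n @^-1` B) = gam B.
Proof. by move=> mB; case: Zi => _ H _; rewrite gamE !H. Qed.

Lemma muZ_cyl F B : uniq F -> (forall n, measurable (B n)) ->
  muZ (cyl F B) = (\prod_(n <- F) gam (B n))%E.
Proof.
move=> uF mB; rewrite muZE.
have -> : vec Z @^-1` cyl F B = \bigcap_(n in [set n | n \in F]) (Z n @^-1` B n).
  by apply/seteqP; split => w /= H n; apply: H.
case: Zi => _ _ ->//; apply: eq_bigr => n _; exact: PZn.
Qed.

Lemma charZ (nu : {measure set (TT R) -> \bar R}) :
  (forall F B, uniq F -> (forall n, measurable (B n)) ->
     nu (cyl F B) = (\prod_(n <- F) gam (B n))%E) ->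
  forall A, measurable A -> muZ A = nu A.
Proof.
move=> H; apply: (@Cyl_unique R muZ nu).
  by have := probability_setT (distribution P (mkmfun mvZ)); rewrite /= => ->; rewrite ltry.
by move=> F B uF mB; rewrite H //; exact: muZ_cyl.
Qed.


Definition Rm (s : seq nat) (p : TT R * TT R) : TT R :=
  fun k => if k \in s then p.2 (index k s) else p.1 k.

Lemma msnd_coord j : measurable_fun setT (fun p : TT R * TT R => p.2 j).
Proof.
exact: (@measurableT_comp _ _ _ _ _ _ (fun x : TT R => x j) setT snd (mcoord j) measurable_snd).
Qed.
Lemma mfst_coord j : measurable_fun setT (fun p : TT R * TT R => p.1 j).
Proof.
exact: (@measurableT_comp _ _ _ _ _ _ (fun x : TT R => x j) setT fst (mcoord j) measurable_fst).
Qed.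

Lemma mRm s : measurable_fun setT (Rm s).
Proof.
apply: mTfun => k; rewrite /Rm; case: (k \in s).
  exact: msnd_coord.
exact: mfst_coord.
Qed.

Lemma Rm_pre s F (B : nat -> set R) : Rm s @^-1` cyl F B =
  cyl [seq k <- F | k \notin s] B `*`
  cyl [seq index k s | k <- [seq k <- F | k \in s]] (fun j => B (nth 0%N s j)).
Proof.
apply/seteqP; split => -[a b] /=.
  move=> H; split => n.
    rewrite mem_filter => /andP[ns nF]; have := H n nF; by rewrite /Rm (negbTE ns).
  move=> /mapP[k]; rewrite mem_filter => /andP[ks kF] ->.
  rewrite nth_index //; have := H k kF; by rewrite /Rm ks.
move=> [H1 H2] n nF; rewrite /Rm; case: ifPn => ns.
  have := H2 (index n s); rewrite nth_index //; apply.
  by apply: map_f; rewrite mem_filter ns nF.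
by apply: H1; rewrite mem_filter ns nF.
Qed.

Lemma Rm_law s : forall A, measurable A ->
  muZ A = distribution (muZ \x muZ)%E (mkmfun (mRm s)) A.
Proof.
apply: charZ => F B uF mB.
rewrite /distribution /pushforward /= Rm_pre product_measure1E; last 2 first.
  exact: cyl_meas.
  by apply: cyl_meas => n; exact: mB.
have uF2 : uniq [seq index k s | k <- [seq k <- F | k \in s]].
  rewrite map_inj_in_uniq ?filter_uniq //.
  move=> k1 k2; rewrite !mem_filter => /andP[k1s _] /andP[k2s _] e.
  by rewrite -(nth_index 0%N k1s) e nth_index.
have -> : (\prod_(n <- F) gam (B n))%E =
  ((\prod_(k <- [seq k <- F | k \notin s]) gam (B k)) *
   (\prod_(j <- [seq index k s | k <- [seq k <- F | k \in s]]) gam (B (nth 0%N s j))))%E.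
  have e : (\prod_(j <- [seq index k s | k <- [seq k <- F | k \in s]]) gam (B (nth 0%N s j)))%E
      = (\prod_(k <- [seq k <- F | k \in s]) gam (B k))%E.
    rewrite big_map; apply: eq_big_seq => k; rewrite mem_filter => /andP[ks _].
    by rewrite nth_index.
  by rewrite e !big_filter muleC [LHS](bigID (fun k => k \in s)).
congr (_ * _)%E.
  by apply: muZ_cyl => //; exact: filter_uniq.
by apply: muZ_cyl => // n; exact: mB.
Qed.

Hypothesis gG : good_density g.

Lemma mshift (c : R) : measurable_fun [set: R] (fun t : R => t + c).
Proof. by apply: measurable_funD => //; exact: measurable_id. Qed.

Lemma gam_int B : measurable B ->
  gam B = (\int[lebesgue_measure]_(x in B) (g x)%:E)%E.
Proof. move=> mB; case: Zi => _ H _; exact: H. Qed.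

Lemma gam_shift (K : R) : 0 < K -> exists C : R, 1 <= C /\
  forall c (D : set R), 0 <= c <= K -> measurable D ->
  (gam ((fun t => t + c)%R @^-1` D) <= C%:E * gam D)%E.
Proof.
case: gG => mg g0 _ [gneg gpos ratio] K0.
have [C0 HC0] := ratio K K0.
exists (Num.max C0 1); split; first by rewrite le_max lexx orbT.
move=> c D /andP[c0 cK] mD.
have mpre : measurable ((fun t => t + c) @^-1` D).
  by rewrite -[X in measurable X]setTI; apply: mshift.
have pw u : g (u - c) <= Num.max C0 1 * g u.
  have [->|cpos] := eqVneq c 0.
    rewrite subr0 -[X in X <= _]mul1r; apply: ler_wpM2r; [exact: g0 | by rewrite le_max lexx orbT].
  have {}cpos : 0 < c by rewrite lt_def cpos c0.
  have [upos|uneg] := ltP 0 u.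
    have := HC0 u c upos cpos cK; rewrite ler_pdivrMr ?gpos // => h.
    apply: (le_trans h); apply: ler_wpM2r; [exact: g0 | by rewrite le_max lexx].
  rewrite gneg; last by rewrite subr_lt0 (le_lt_trans uneg).
  apply: mulr_ge0; last exact: g0.
  by apply: (@le_trans _ _ 1); rewrite ?ler01 // le_max lexx orbT.
rewrite !gam_int //.
have mgc : measurable_fun [set: R] (fun u => (g (u - c))%:E).
  apply/measurable_EFinP; apply: measurableT_comp => //.
  by apply: measurable_funD => //; exact: measurable_id.
have -> : (\int[lebesgue_measure]_(x in (fun t => t + c)%R @^-1` D) (g x)%:E)%E =
    (\int[lebesgue_measure]_(x in D) (g (x - c))%:E)%E.
  rewrite -(@int_shift R c D (fun u => (g (u - c))%:E)) //; last by move=> x; rewrite lee_fin g0.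
  by apply: eq_integral => t _; rewrite addrK.
rewrite -ge0_integralZl_EFin //; last 3 first.
- by move=> x _; rewrite lee_fin g0.
- by apply/measurable_EFinP; apply: measurable_funS mg.
- by apply: (@le_trans _ _ 1); rewrite ?ler01 // le_max lexx orbT.
apply: ge0_le_integral => //.
- by move=> x _; rewrite lee_fin g0.
- exact: measurable_funS mgc.
- apply/measurable_EFinP; apply: measurable_funM => //.
  by apply: measurable_funS mg.
by move=> x _; rewrite lee_fin pw.
Qed.

Definition upd (x : TT R) (j : nat) (t : R) : TT R :=
  fun k => if k == j then t else x k.
Definition tau1 (j : nat) (c : R) (z : TT R) : TT R :=
  fun k => if k == j then z k + c else z k.
Definition tau (n : nat) (c : R) (z : TT R) : TT R :=
  fun k => if (k < n)%N then z k + c else z k.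

Lemma mupd x j : measurable_fun [set: R] (upd x j).
Proof.
apply: mTfun => k; rewrite /upd; case: (k == j); first exact: measurable_id.
exact: measurable_cst.
Qed.

Lemma mtau1 j c : measurable_fun setT (tau1 j c).
Proof.
apply: mTfun => k; rewrite /tau1; case: (k == j); last exact: mcoord.
by apply: measurable_funD => //; exact: mcoord.
Qed.

Lemma mtau n c : measurable_fun setT (tau n c).
Proof.
apply: mTfun => k; rewrite /tau; case: (k < n)%N; last exact: mcoord.
by apply: measurable_funD => //; exact: mcoord.
Qed.

Lemma mpre d' (T' : measurableType d') (f : T' -> TT R) (A : set (TT R)) :
  measurable_fun setT f -> measurable A -> measurable (f @^-1` A).
Proof. by move=> mf mA; rewrite -[X in measurable X]setTI; exact: mf. Qed.

Lemma muZ_coord0 (E : set R) : muZ ((fun z : TT R => z 0%N) @^-1` E) = gam E.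
Proof. by []. Qed.

Lemma Rm1E j (x z : TT R) : Rm [:: j] (x, z) = upd x j (z 0%N).
Proof.
by apply/funext => k; rewrite /Rm /upd inE; case: eqP => // ->; rewrite /= eqxx.
Qed.

Lemma xsecE (B : set (TT R * TT R)) x : xsection B x = [set z | B (x, z)].
Proof. by apply/seteqP; split => z /=; rewrite /xsection /= inE. Qed.

Lemma xsec_Rm1 j (A : set (TT R)) (x : TT R) :
  xsection (Rm [:: j] @^-1` A) x = (fun z : TT R => z 0%N) @^-1` (upd x j @^-1` A).
Proof. by rewrite xsecE; apply/seteqP; split => z /=; rewrite Rm1E. Qed.

Lemma tau1_upd j c x t : tau1 j c (upd x j t) = upd x j (t + c).
Proof. by apply/funext => k; rewrite /tau1 /upd; case: eqP. Qed.

Lemma shift1 (K C : R) :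
  (forall c (D : set R), 0 <= c <= K -> measurable D ->
     (gam ((fun t => t + c)%R @^-1` D) <= C%:E * gam D)%E) -> 0 <= C ->
  forall j c A, 0 <= c <= K -> measurable A ->
  (muZ (tau1 j c @^-1` A) <= C%:E * muZ A)%E.
Proof.
move=> HC C0 j c A cK mA.
rewrite (Rm_law [:: j] (mpre (mtau1 j c) mA)) (Rm_law [:: j] mA).
rewrite /distribution /pushforward /= /product_measure1 /=.
rewrite -(ge0_integralZl_EFin muZ) //; last first.
  exact: (measurable_fun_xsection muZ (mpre (mRm [:: j]) mA)).
apply: ge0_le_integral => //.
- exact: (measurable_fun_xsection muZ (mpre (mRm [:: j]) (mpre (mtau1 j c) mA))).
- apply: emeasurable_funM => //.
  exact: (measurable_fun_xsection muZ (mpre (mRm [:: j]) mA)).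
move=> x _ /=.
have -> : xsection (Rm [:: j] @^-1` (tau1 j c @^-1` A)) x =
    (fun z : TT R => z 0%N) @^-1` ((fun t => t + c)%R @^-1` (upd x j @^-1` A)).
  by rewrite xsecE; apply/seteqP; split => z /=; rewrite Rm1E tau1_upd.
rewrite xsec_Rm1 !muZ_coord0; apply: HC => //.
exact: mpre (mupd x j) mA.
Qed.

Lemma tauS n c z : tau n.+1 c z = tau1 n c (tau n c z).
Proof.
apply/funext => k; rewrite /tau /tau1 ltnS leq_eqVlt.
by case: eqP => [->|kn] /=; rewrite ?ltnn.
Qed.

Lemma shiftn (K C : R) :
  (forall c (D : set R), 0 <= c <= K -> measurable D ->
     (gam ((fun t => t + c)%R @^-1` D) <= C%:E * gam D)%E) -> 0 <= C ->
  forall n c A, 0 <= c <= K -> measurable A ->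
  (muZ (tau n c @^-1` A) <= (C ^+ n)%:E * muZ A)%E.
Proof.
move=> HC C0 n c A cK; elim: n A => [|n IH] A mA.
  have -> : tau 0 c @^-1` A = A.
    by apply/seteqP; split => z /=; have -> : tau 0 c z = z by apply/funext => k.
  by rewrite expr0 mul1e.
have -> : tau n.+1 c @^-1` A = tau n c @^-1` (tau1 n c @^-1` A).
  by apply/seteqP; split => z /=; rewrite tauS.
apply: (le_trans (IH _ (mpre (mtau1 n c) mA))).
rewrite exprSr EFinM -muleA; apply: lee_wpmul2l.
  by rewrite lee_fin exprn_ge0.
exact: (shift1 HC).
Qed.


Hypothesis abs : law_abs_cont P (vec X) (vec Z).

Lemma small_pos (r : R) : 0 < r -> exists m : nat, (m.+1%:R)^-1 <= r.
Proof.
move=> r0; exists (Num.Def.trunc r^-1).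
rewrite invf_ple ?posrE ?ltr0Sn //.
exact: ltW (truncnS_gt _).
Qed.

Lemma h_null s A : measurable A -> muZ A = 0%E ->
  (\int[muX]_x muZ (xsection (Rm s @^-1` A) x) = 0)%E.
Proof.
move=> mA A0.
set h := fun x => muZ (xsection (Rm s @^-1` A) x).
have mh : measurable_fun setT h := measurable_fun_xsection muZ (mpre (mRm s) mA).
have h0 x : (0 <= h x)%E by exact: measure_ge0.
have intZ : (\int[muZ]_x h x = 0)%E.
  by rewrite -A0 (Rm_law s mA).
pose Nm m := [set x | ((m.+1%:R)^-1%:E <= h x)%E].
have mNm m : measurable (Nm m).
  by have := emeasurable_fun_c_infty measurableT mh ((m.+1%:R)^-1%:E); rewrite setTI.
have NmZ m : muZ (Nm m) = 0%E.
  have H : ((m.+1%:R)^-1%:E * muZ (Nm m) <= 0)%E.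
    rewrite -integral_cst // -intZ.
    apply: (@le_trans _ _ (\int[muZ]_(x in Nm m) h x)%E).
      apply: ge0_le_integral => //.
      - by move=> x _; rewrite lee_fin invr_ge0.
      - exact: measurable_funS mh.
    by apply: ge0_subset_integral => //.
  have : ((m.+1%:R)^-1%:E * muZ (Nm m) == 0)%E.
    by rewrite eq_le H mule_ge0 // lee_fin invr_ge0.
  by rewrite mule_eq0 eqe invr_eq0 pnatr_eq0 /= => /eqP.
have NmX m : muX (Nm m) = 0%E := abs (mNm m) (NmZ m).
have NX : muX (\bigcup_m Nm m) = 0%E.
  apply/negligibleP; first exact: bigcupT_measurable.
  apply: negligible_bigcup => m; apply/negligibleP => //; exact: NmX.
have -> : (\int[muX]_x h x = \int[muX]_(x in setT `\` \bigcup_m Nm m) h x)%E.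
  apply: ge0_negligible_integral => //.
  exact: bigcupT_measurable.
rewrite -(integral0 muX (setT `\` \bigcup_m Nm m)).
apply: eq_integral => x; rewrite inE => -[_ /= nN].
apply/eqP; rewrite eq_le h0 andbT; rewrite leNgt; apply/negP => hpos.
apply: nN.
have [m hm] : exists m : nat, ((m.+1%:R)^-1%:E <= h x)%E.
  move: hpos; case: (h x) => [r||] //.
    rewrite lte_fin => r0; have [m hm] := small_pos r0; exists m; by rewrite lee_fin.
  by move=> _; exists 0%N; rewrite leey.
by exists m.
Qed.


Hypothesis indep : indep_seq P (vec X) (vec Z).
Variable I : (nat -> R) -> seq nat.
Hypothesis Isel : index_selector I.

Let mvXZ : measurable_fun setT (fun w => ((vec X w : TT R), (vec Z w : TT R))).
Proof. exact: measurable_fun_pair mvX mvZ. Qed.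

Lemma mpreg d1 d2 (T1 : measurableType d1) (T2 : measurableType d2) (f : T1 -> T2) B :
  measurable_fun setT f -> measurable B -> measurable (f @^-1` B).
Proof. by move=> mf mB; rewrite -[X in measurable X]setTI; exact: mf. Qed.

Lemma joint S : measurable S ->
  P ((fun w => ((vec X w : TT R), (vec Z w : TT R))) @^-1` S) = (muX \x muZ)%E S.
Proof.
move=> mS; symmetry.
by rewrite (@product_measure_unique _ _ _ _ R muX muZ (distribution P (mkmfun mvXZ))).
Qed.

Lemma mXstar s : measurable_fun setT (Xstar s : TT R -> R).
Proof.
rewrite /Xstar; move: (head 0%N s) => h.
elim: s => [|a s IH].
  under eq_fun do rewrite big_nil.
  exact: mcoord.
under eq_fun do rewrite big_cons.
by apply: measurable_maxr => //; exact: mcoord.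
Qed.

Lemma Xstar_ge0 s (x : TT R) : (forall k, 0 <= x k) -> 0 <= Xstar s x.
Proof.
move=> x0; rewrite /Xstar; elim: s (head 0%N s) => [|a s IH] h.
  by rewrite big_nil.
by rewrite big_cons le_max x0.
Qed.

Definition Ymapf s (p : TT R * TT R) : TT R := Ymap s p.1 p.2.

Lemma mYmapf s : measurable_fun setT (Ymapf s).
Proof.
apply: mTfun => k; rewrite /Ymapf /Ymap; case: (k \in s); last exact: mfst_coord.
apply: measurable_funD; last exact: msnd_coord.
apply: measurable_funM => //.
exact: (measurableT_comp (mXstar s) measurable_fst).
Qed.

Lemma Ymap_Rm s (x z : TT R) :
  Ymap s x z = Rm s (x, tau (size s) (2 * Xstar s x) z).
Proof.
apply/funext => k; rewrite /Ymap /Rm /tau /=; case: ifP => // ks.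
by rewrite index_mem ks addrC.
Qed.

Definition E s (K : nat) : set (TT R) :=
  [set x | I x = s /\ (forall k, 0 <= x k) /\ Xstar s x <= K%:R].

Lemma mE s K : measurable (E s K).
Proof.
have -> : E s K = [set x | I x = s] `&`
    (\bigcap_k ((fun x : TT R => x k) @^-1` `[0, +oo[%classic)) `&`
    (Xstar s @^-1` `]-oo, K%:R]%classic).
  apply/seteqP; split => x /=.
    move=> [Ixs [x0 xK]]; split; first split => //.
      by move=> k _; rewrite /= in_itv /= x0.
    by rewrite /= in_itv /= xK.
  move=> [[Ixs H] xK]; split => //; split.
    by move=> k; have := H k Logic.I; rewrite /= in_itv /= andbT.
  by move: xK; rewrite /= in_itv.
apply: measurableI; first apply: measurableI.
- by case: Isel => _ /(_ s).
- apply: bigcapT_measurable => k; exact: mpreg (mcoord k) (measurable_itv _).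
- exact: mpreg (mXstar s) (measurable_itv _).
Qed.


Definition Sset s K A : set (TT R * TT R) := [set p | E s K p.1 /\ A (Ymapf s p)].

Lemma mSset s K A : measurable A -> measurable (Sset s K A).
Proof.
move=> mA.
have -> : Sset s K A = (E s K `*` setT) `&` (Ymapf s @^-1` A).
  by apply/seteqP; split => -[x z] /=; [move=> [? ?] | move=> [[? _] ?]].
apply: measurableI; first exact: measurableX (mE s K) measurableT.
exact: mpre (mYmapf s) mA.
Qed.

Lemma bound s K A : measurable A -> muZ A = 0%E ->
  P ((fun w => ((vec X w : TT R), (vec Z w : TT R))) @^-1` Sset s K A) = 0%E.
Proof.
move=> mA A0.
have K0 : 0 < 2 * K%:R + 1 :> R by rewrite ltr_pwDr // mulr_ge0.
have [C [C1 HC]] := gam_shift K0.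
have C0 : 0 <= C by apply: le_trans C1.
apply/eqP; rewrite eq_le measure_ge0 andbT.
rewrite joint; last exact: mSset.
rewrite /product_measure1 /=.
apply: (@le_trans _ _ (\int[muX]_x ((C ^+ size s)%:E * muZ (xsection (Rm s @^-1` A) x)))%E).
  apply: ge0_le_integral => //.
  - exact: (measurable_fun_xsection muZ (mSset s K mA)).
  - apply: emeasurable_funM => //.
    exact: (measurable_fun_xsection muZ (mpre (mRm s) mA)).
  move=> x _ /=.
  have [Ex|nEx] := pselect (E s K x).
    have -> : xsection (Sset s K A) x =
        tau (size s) (2 * Xstar s x) @^-1` xsection (Rm s @^-1` A) x.
      rewrite !xsecE; apply/seteqP; split => z /=.
        by move=> [_ HA]; rewrite /Ymapf /= Ymap_Rm in HA.
      by move=> HA; split => //; rewrite /Ymapf /= Ymap_Rm.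
    apply: (shiftn HC C0).
      case: Ex => _ [x0 xK]; rewrite mulr_ge0 ?Xstar_ge0 //=.
      apply: (@le_trans _ _ (2 * K%:R)); last by rewrite lerDl.
      by rewrite ler_pM2l.
    by apply: measurable_xsection; exact: mpre (mRm s) mA.
  have -> : xsection (Sset s K A) x = set0.
    by rewrite xsecE; apply/seteqP; split => z // [].
  by rewrite measure0 mule_ge0 ?lee_fin ?exprn_ge0.
rewrite (ge0_integralZl_EFin muX) ?exprn_ge0 //; last first.
  exact: (measurable_fun_xsection muZ (mpre (mRm s) mA)).
by rewrite h_null // mule0.
Qed.


Lemma PXneg k : P (X k @^-1` `]-oo, 0[%classic) = 0%E.
Proof.
have := abs (mpreg (mcoord k) (measurable_itv `]-oo, (0:R)[)).
apply => /=.
rewrite -[LHS]/(P (Z k @^-1` `]-oo, 0[%classic)).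
case: Zi => _ -> // _.
rewrite -(integral0 lebesgue_measure `]-oo, (0:R)[%classic).
apply: eq_integral => x; rewrite inE /= in_itv /= => x0.
by case: gG => _ _ _ [-> // _ _].
Qed.

Lemma main_sec : law_abs_cont P (fun w => Ymap (I (vec X w)) (vec X w) (vec Z w)) (vec Z).
Proof.
move=> A mA A0.
have mA' : measurable (A : set (TT R)) := mA.
have A0' : muZ A = 0%E := A0.
set Y := fun w => Ymap (I (vec X w)) (vec X w) (vec Z w).
pose vXZ := fun w => ((vec X w : TT R), (vec Z w : TT R)).
pose Qs m : set Omega := if unpickle m is Some s then
   (vec X @^-1` [set x | I x = s]) `&` (vXZ @^-1` (Ymapf s @^-1` A)) else set0.
have YQ : Y @^-1` A = \bigcup_m Qs m.
  apply/seteqP; split => w /=.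
    move=> Yw; exists (pickle (I (vec X w))) => //.
    by rewrite /Qs pickleK.
  move=> [m _]; rewrite /Qs; case: (unpickle m) => [s|] // [/= Is HA].
  by rewrite /Y Is.
have mY : measurable (Y @^-1` A).
  rewrite YQ; apply: bigcupT_measurable => m; rewrite /Qs; case: (unpickle m) => [s|] //.
  apply: measurableI.
    by apply: mpre mvX _; case: Isel => _ /(_ s).
  exact: mpreg mvXZ (mpre (mYmapf s) mA').
apply/negligibleP => //.
pose N0 := \bigcup_k (X k @^-1` `]-oo, (0:R)[%classic).
pose Q m : set Omega := if unpickle m is Some (s, K) then vXZ @^-1` Sset s K A else set0.
apply: (@negligibleS _ _ _ _ (N0 `|` \bigcup_m Q m)).
  move=> w Yw.
  have [[k Xk]|nN] := pselect (exists k, X k w < 0).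
    by left; exists k => //=; rewrite in_itv /= Xk.
  right; set s := I (vec X w); set K := (Num.Def.trunc (Xstar s (vec X w))).+1.
  exists (pickle (s, K)) => //; rewrite /Q pickleK /=; split => //.
  split => //; split.
    by move=> k; rewrite leNgt; apply/negP => Xk; apply: nN; exists k.
  exact: ltW (truncnS_gt _).
apply: negligibleU.
  apply: negligible_bigcup => k; apply/negligibleP.
    exact: mpreg (mX k) (measurable_itv _).
  exact: PXneg.
apply: negligible_bigcup => m; rewrite /Q; case: (unpickle m) => [[s K]|].
  apply/negligibleP; first exact: mpreg mvXZ (mSset s K mA').
  exact: bound.
exact: negligible_set0.
Qed.

End Main.

Unset Implicit Arguments.

Theorem mainTheorem10 (R : realType) (d : measure_display)
    (Omega : measurableType d) (P : probability Omega R)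
    (g : R -> R) (Z X : nat -> Omega -> R) (I : (nat -> R) -> seq nat) :
  good_density g ->
  iid_with_density P g Z ->
  (forall n, measurable_fun [set: Omega] (X n)) ->
  indep_seq P (vec X) (vec Z) ->
  law_abs_cont P (vec X) (vec Z) ->
  index_selector I ->
  law_abs_cont P (fun w => Ymap (I (vec X w)) (vec X w) (vec Z w)) (vec Z).
Proof.
move=> H1 H2 H3 H4 H5 H6.
exact: (main_sec H2 H3 H1 H5 H4 H6).
Qed.
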